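(* Let $\mathcal{K}=\mathbb{F}_q((t))$, $\mathcal{O}=\mathbb{F}_q[[t]]$, $G=PGL(2,\mathcal{K})$, and fix an integer $k\ge 1$. Let $I^0=\left\{\begin{pmatrix}1+ta & b\\ tc & 1+td\end{pmatrix} : a,b,c,d\in\mathcal{O}\right\}$, let $A\subset G$ be the subgroup generated by $I^0$ and $\sigma=\begin{pmatrix}0&1\\ t&0\end{pmatrix}$, let $\psi:\mathbb{F}_q\to\mathbb{C}^\times$ be a nontrivial additive character and let $\chi:A\to\mathbb{C}^\times$ be the character given on $I^0$ by $\chi\left(\begin{pmatrix}1+ta & b\\ tc & 1+td\end{pmatrix}\right)=\psi(b_0+c_0)$ and with $\chi(\sigma)=1$. Let the group $1+t^k\mathcal{O}$ act on $G$ on the left by $g\mapsto\begin{pmatrix}z&0\\0&1\end{pmatrix}g$, and $A$ act on the right by multiplication. Call a $(1+t^k\mathcal{O})\times A$-orbit in $G$ relevant if it supports a nonzero function $f$ with $f\left(\begin{pmatrix}z&0\\0&1\end{pmatrix}g\,a\right)=\chi(a)f(g)$ for all $z\in 1+t^k\mathcal{O}$, $a\in A$. For each $n\in\mathbb{Z}$ let $R_{n,k}$ be the set of matrices $$\begin{pmatrix}a_nt^n & b_{n-k+1}t^{n-k+1}+\dots+b_{n-1}t^{n-1}\\ 0&1\end{pmatrix},\qquad a_n\in\mathbb{F}_q^\times,\ b_i\in\mathbb{F}_q,$$ and let $R=\bigcup_{n\in\mathbb{Z}}R_{n,k}$. Then $R$ contains exactly one representative of every relevant $(1+t^k\mathcal{O})\times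 A$-orbit in $G$.
   Context: For $x\in\mathcal{O}$, $x_i$ denotes the coefficient of $t^i$ in $x$. *)

(* Defs.v *)
From HB Require Import structures.
From mathcomp Require Import all_boot all_order all_algebra all_field.
From mathcomp Require Import zify.
From Stdlib Require Import ClassicalEpsilon.
Set Implicit Arguments. Unset Strict Implicit. Unset Printing Implicit Defensive.
Import Order.TTheory GRing.Theory Num.Theory.
Local Open Scope ring_scope.

Section Laurent.
Variable F : finFieldType.

(** Formal Laurent series: coefficient functions Z -> F with support bounded below.
    [x i] is the coefficient of t^i. *)
Definition lbounded (f : int -> F) : Prop :=
  exists m : int, forall i : int, i < m -> f i = 0.

Record laurent := Laurent { lcoef :> int -> F; lcoefP : lbounded lcoef }.

Definition lbound (x : laurent) : int :=
  proj1_sig (constructive_indefinite_description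
               (fun m : int => forall i : int, i < m -> x i = 0) (lcoefP x)).

Lemma lboundP (x : laurent) (i : int) : i < lbound x -> x i = 0.
Proof.
rewrite /lbound; case: constructive_indefinite_description => m Hm /=; exact: Hm.
Qed.

Definition lmonom_fun (n : int) (c : F) (i : int) : F := if i == n then c else 0.
Lemma lmonom_bounded n c : lbounded (lmonom_fun n c).
Proof. exists n => i Hi; rewrite /lmonom_fun; case: eqP => // E; lia. Qed.
Definition lmonom (n : int) (c : F) : laurent := Laurent (lmonom_bounded n c).

Definition lconst (c : F) : laurent := lmonom 0 c.
Definition lzero : laurent := lconst 0.
Definition lone : laurent := lconst 1.
Definition lt_ : laurent := lmonom 1 1.

Definition ladd_fun (x y : laurent) (i : int) : F := x i + y i.
Lemma ladd_bounded x y : lbounded (ladd_fun x y).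
Proof.
exists (Order.min (lbound x) (lbound y)) => i Hi.
rewrite /ladd_fun !lboundP ?addr0 //; move: Hi; rewrite lt_min => /andP[] //.
Qed.
Definition ladd x y : laurent := Laurent (ladd_bounded x y).

Definition lopp_fun (x : laurent) (i : int) : F := - x i.
Lemma lopp_bounded x : lbounded (lopp_fun x).
Proof. by exists (lbound x) => i Hi; rewrite /lopp_fun lboundP ?oppr0. Qed.
Definition lopp x : laurent := Laurent (lopp_bounded x).
Definition lsub x y := ladd x (lopp y).

(** Cauchy product: (xy)_n = sum_{i} x_i y_{n-i}, a finite sum over
    lbound x <= i <= n - lbound y. *)
Definition lmul_fun (x y : laurent) (n : int) : F :=
  \sum_(j < (absz (n - lbound x - lbound y)%R).+1)
     x (lbound x + j%:Z) * y (n - lbound x - j%:Z).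
Lemma lmul_bounded x y : lbounded (lmul_fun x y).
Proof.
exists (lbound x + lbound y) => i Hi; rewrite /lmul_fun big1 // => j _.
by rewrite (@lboundP y) ?mulr0 //; lia.
Qed.
Definition lmul x y : laurent := Laurent (lmul_bounded x y).

Definition leqc (x y : laurent) : Prop := forall i, x i = y i.
Definition lnz (x : laurent) : Prop := exists i, x i != 0.

Record mat2 := Mat2 { e11 : laurent; e12 : laurent; e21 : laurent; e22 : laurent }.

Definition mmul (M N : mat2) : mat2 :=
  Mat2 (ladd (lmul (e11 M) (e11 N)) (lmul (e12 M) (e21 N)))
       (ladd (lmul (e11 M) (e12 N)) (lmul (e12 M) (e22 N)))
       (ladd (lmul (e21 M) (e11 N)) (lmul (e22 M) (e21 N)))
       (ladd (lmul (e21 M) (e12 N)) (lmul (e22 M) (e22 N))).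
Definition mdet (M : mat2) : laurent :=
  lsub (lmul (e11 M) (e22 M)) (lmul (e12 M) (e21 M)).
(** adjugate = inverse up to the scalar det, i.e. the inverse in PGL *)
Definition madj (M : mat2) : mat2 :=
  Mat2 (e22 M) (lopp (e12 M)) (lopp (e21 M)) (e11 M).
Definition mscale (c : laurent) (M : mat2) : mat2 :=
  Mat2 (lmul c (e11 M)) (lmul c (e12 M)) (lmul c (e21 M)) (lmul c (e22 M)).
Definition meq (M N : mat2) : Prop :=
  [/\ leqc (e11 M) (e11 N), leqc (e12 M) (e12 N),
      leqc (e21 M) (e21 N) & leqc (e22 M) (e22 N)].

(** GL(2,K) and the equality of PGL(2,K) = GL(2,K)/K^x *)
Definition inGL (M : mat2) : Prop := lnz (mdet M).
Definition proj_eq (M N : mat2) : Prop := exists c, lnz c /\ meq M (mscale c N).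

Definition inO (x : laurent) : Prop := forall i : int, i < 0 -> x i = 0.
Definition in_tO (x : laurent) : Prop := forall i : int, i <= 0 -> x i = 0.
Definition in_1tO (x : laurent) : Prop := inO x /\ x 0 = 1.
Definition inUk (k : nat) (z : laurent) : Prop :=
  inO z /\ z 0 = 1 /\ forall i : int, 0 < i -> i < k%:Z -> z i = 0.

Definition inI0 (M : mat2) : Prop :=
  [/\ in_1tO (e11 M), inO (e12 M), in_tO (e21 M) & in_1tO (e22 M)].

Definition sigma : mat2 := Mat2 lzero lone lt_ lzero.

Inductive inA : mat2 -> Prop :=
| A_I0 M : inI0 M -> inA M
| A_sigma : inA sigma
| A_inv M : inA M -> inA (madj M)
| A_mul M N : inA M -> inA N -> inA (mmul M N)
| A_proj M N : proj_eq M N -> inA N -> inA M.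

Definition diagz (z : laurent) : mat2 := Mat2 z lzero lzero lone.

Definition orbitA (k : nat) (g M : mat2) : Prop :=
  exists z a, inUk k z /\ inA a /\ proj_eq M (mmul (mmul (diagz z) g) a).

Definition add_character (psi : F -> algC) : Prop :=
  [/\ forall x y, psi (x + y) = psi x * psi y,
      forall x, psi x != 0 & exists x, psi x != 1].

(** chi : A -> C^x a character (function on A as a subset of PGL),
    chi([1+ta, b; tc, 1+td]) = psi(b_0 + c_0), chi(sigma) = 1.
    Note: c_0 is the coefficient of t^1 in the entry tc. *)
Definition is_chi (psi : F -> algC) (chi : mat2 -> algC) : Prop :=
  [/\ forall M N, inA M -> proj_eq M N -> chi M = chi N,
      forall M N, inA M -> inA N -> chi (mmul M N) = chi M * chi N,
      forall M, inA M -> chi M != 0,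
      forall M, inI0 M -> chi M = psi (e12 M 0 + e21 M 1)
    & chi sigma = 1].

Definition relevant (k : nat) (chi : mat2 -> algC) (g : mat2) : Prop :=
  exists f : mat2 -> algC,
    [/\ forall M N, proj_eq M N -> f M = f N,
        forall M, ~ orbitA k g M -> f M = 0,
        exists M, f M != 0
      & forall z a M, inUk k z -> inA a -> inGL M ->
          f (mmul (mmul (diagz z) M) a) = chi a * f M].

Definition inR (k : nat) (M : mat2) : Prop :=
  exists (n : int) (a : F), a != 0 /\
    [/\ leqc (e11 M) (lmonom n a),
        forall i : int, e12 M i != 0 -> (n - k%:Z + 1 <= i) && (i <= n - 1),
        leqc (e21 M) lzero
      & leqc (e22 M) lone].

End Laurent.

(* Main.v *)
From HB Require Import structures.
From mathcomp Require Import all_boot all_order all_algebra all_field.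
From mathcomp Require Import zify ring.
From mathcomp Require Import boolp.
From Stdlib Require Import FunctionalExtensionality ProofIrrelevance.
Require Import Defs.
Set Implicit Arguments. Unset Strict Implicit. Unset Printing Implicit Defensive.
Import Order.TTheory GRing.Theory Num.Theory.
Local Open Scope ring_scope.

Section L1.
Variable F : finFieldType.
Local Notation K := (laurent F).

Lemma lext (x y : K) : (forall i, x i = y i) -> x = y.
Proof.
case: x => fx px; case: y => fy py /= H.
have E : fx = fy by apply: functional_extensionality.
subst fy; by rewrite (proof_irrelevance _ px py).
Qed.

Definition bnd (L : int) (x : K) := forall i : int, i < L -> x i = 0.

Definition wsum (h : int -> F) (A : int) (N : nat) := \sum_(j < N) h (A + j%:Z).

Lemma wsum_extl h A N p : (forall i, i < A -> h i = 0) ->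
  wsum h A N = wsum h (A - p%:Z) (p + N).
Proof.
move=> H; rewrite /wsum [RHS]big_split_ord /= [X in _ = X + _]big1 ?add0r; last first.
  move=> j _; apply: H; have := ltn_ord j; lia.
apply: eq_bigr => j _; congr h; lia.
Qed.

Lemma wsum_extr h A N q : (forall i, A + N%:Z <= i -> h i = 0) ->
  wsum h A N = wsum h A (N + q).
Proof.
move=> H; rewrite /wsum [RHS]big_split_ord /= [X in _ = _ + X]big1 ?addr0 //.
move=> j _; apply: H; lia.
Qed.

Lemma wsum_eq h A N B M :
  (forall i, i < A -> h i = 0) -> (forall i, A + N%:Z <= i -> h i = 0) ->
  (forall i, i < B -> h i = 0) -> (forall i, B + M%:Z <= i -> h i = 0) ->
  wsum h A N = wsum h B M.
Proof.
move=> H1 H2 H3 H4.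
wlog AB : A N B M H1 H2 H3 H4 / A <= B.
  move=> W; case: (lerP A B) => AB; first exact: W.
  symmetry; apply: W => //; exact: ltW.
have [p Ep] : exists p : nat, B = A + p%:Z by exists (absz (B - A)); lia.
rewrite (wsum_extl M p H3).
have -> : B - p%:Z = A by lia.
rewrite (wsum_extr (p + M) H2) (@wsum_extr h A (p+M) N) 1?addnC // => i Hi.
apply: H4; lia.
Qed.

Lemma lmul_w (x y : K) n A N :
  (forall i, i < A -> x i * y (n - i) = 0) ->
  (forall i, A + N%:Z <= i -> x i * y (n - i) = 0) ->
  lmul x y n = wsum (fun i => x i * y (n - i)) A N.
Proof.
move=> H1 H2.
have -> : lmul x y n = wsum (fun i => x i * y (n - i)) (lbound x)
           (absz (n - lbound x - lbound y)%R).+1.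
  rewrite /= /lmul_fun /wsum; apply: eq_bigr => j _; by rewrite opprD addrA.
apply: wsum_eq => // i Hi.
  by rewrite lboundP ?mul0r.
rewrite (@lboundP _ y) ?mulr0 //; move: Hi.
have := ler_norm (n - lbound x - lbound y); rewrite -abszE.
move: (absz _) => a; move: (lbound x) (lbound y) => b c. clear H1 H2; lia.
Qed.

Lemma lmul_bnd (x y : K) L1 L2 : bnd L1 x -> bnd L2 y -> bnd (L1 + L2) (lmul x y).
Proof.
move=> Hx Hy n Hn; rewrite (@lmul_w x y n L1 0) ?[wsum _ _ _]big_ord0 // => i Hi.
  by rewrite Hx ?mul0r.
by rewrite Hy ?mulr0 //; timeout 10 lia.
Qed.

Definition pol (L : int) (N : nat) (x : K) : {poly F} := \poly_(j < N) x (L + j%:Z).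

Lemma lmul_pol (x y : K) L1 L2 N d : bnd L1 x -> bnd L2 y -> (d < N)%N ->
  lmul x y (L1 + L2 + d%:Z) = (pol L1 N x * pol L2 N y)`_d.
Proof.
move=> Hx Hy dN; rewrite coefM (@lmul_w x y _ L1 d.+1).
- rewrite /wsum; apply: eq_bigr => j _.
  have jd := ltn_ord j.
  have h1 : (j < N)%N by rewrite (leq_ltn_trans _ dN) // -ltnS.
  have h2 : (d - j < N)%N by rewrite (leq_ltn_trans (leq_subr _ _) dN).
  rewrite !coef_poly h1 h2; congr (_ * y _).
  move: (j : nat) jd => jj jd; timeout 10 lia.
- by move=> i Hi; rewrite Hx ?mul0r.
- by move=> i Hi; rewrite Hy ?mulr0 //; timeout 10 lia.
Qed.

Lemma bndP (x : K) : bnd (lbound x) x.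
Proof. exact: lboundP. Qed.

Lemma bnd_le (x : K) L L' : L' <= L -> bnd L x -> bnd L' x.
Proof. move=> le H i Hi; apply: H; exact: lt_le_trans Hi le. Qed.

Lemma coefM_eqL (p p' q : {poly F}) d :
  (forall j, (j <= d)%N -> p`_j = p'`_j) -> (p * q)`_d = (p' * q)`_d.
Proof. by move=> H; rewrite !coefM; apply: eq_bigr => j _; rewrite H // -ltnS. Qed.

Lemma coefM_eqR (p q q' : {poly F}) d :
  (forall j, (j <= d)%N -> q`_j = q'`_j) -> (p * q)`_d = (p * q')`_d.
Proof. by move=> H; rewrite !coefM; apply: eq_bigr => j _; rewrite H // leq_subr. Qed.

Lemma pol_mul (x y : K) L1 L2 N j : bnd L1 x -> bnd L2 y -> (j < N)%N ->
  (pol (L1 + L2) N (lmul x y))`_j = (pol L1 N x * pol L2 N y)`_j.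
Proof. by move=> Hx Hy jN; rewrite coef_poly jN (lmul_pol Hx Hy jN). Qed.

Lemma idx_split (n L : int) : ~ (n < L) -> n = L + (absz (n - L))%:Z.
Proof.
move=> H; rewrite abszE ger0_norm; first by rewrite addrCA subrr addr0.
rewrite subr_ge0; case: lerP => // /H; done.
Qed.

Lemma lmulA (x y z : K) : lmul x (lmul y z) = lmul (lmul x y) z.
Proof.
apply: lext => n.
set Lx := lbound x; set Ly := lbound y; set Lz := lbound z.
have Hx := @bndP x; have Hy := @bndP y; have Hz := @bndP z.
have Hxy := lmul_bnd Hx Hy; have Hyz := lmul_bnd Hy Hz.
case: (boolP (n < Lx + Ly + Lz)) => Hn.
  rewrite (lmul_bnd Hx Hyz) ?(lmul_bnd Hxy Hz) //; by rewrite ?addrA.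
move/negP: Hn => /idx_split ->; set d := absz _.
rewrite (lmul_pol (N := d.+1) Hxy Hz) //.
rewrite (_ : Lx + Ly + Lz + d%:Z = Lx + (Ly + Lz) + d%:Z); last by rewrite addrA.
rewrite (lmul_pol (N := d.+1) Hx Hyz) //.
rewrite [RHS](@coefM_eqL _ (pol Lx d.+1 x * pol Ly d.+1 y)); last first.
  by move=> j jd; rewrite (pol_mul Hx Hy).
rewrite [LHS](@coefM_eqR _ _ (pol Ly d.+1 y * pol Lz d.+1 z)); last first.
  by move=> j jd; rewrite (pol_mul Hy Hz).
by rewrite mulrA.
Qed.

Lemma lmulC (x y : K) : lmul x y = lmul y x.
Proof.
apply: lext => n.
have Hx := @bndP x; have Hy := @bndP y.
case: (boolP (n < lbound x + lbound y)) => Hn.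
  by rewrite (lmul_bnd Hx Hy) ?(lmul_bnd Hy Hx) // addrC.
move/negP: Hn => /idx_split ->; set d := absz _.
rewrite (lmul_pol (N := d.+1) Hx Hy) //.
rewrite (_ : lbound x + lbound y + d%:Z = lbound y + lbound x + d%:Z); last by rewrite (addrC (lbound x)).
by rewrite (lmul_pol (N := d.+1) Hy Hx) // mulrC.
Qed.

Lemma lmonomE n (c : F) i : lmonom n c i = if i == n then c else 0.
Proof. by []. Qed.

Lemma lzeroE i : (lzero F) i = 0.
Proof. by rewrite /lzero /lconst lmonomE; case: ifP. Qed.

Lemma loneE i : (lone F) i = if i == 0 then 1 else 0.
Proof. by []. Qed.

Lemma laddE' (x y : K) i : ladd x y i = x i + y i.
Proof. by []. Qed.

Lemma loppE' (x : K) i : lopp x i = - x i.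
Proof. by []. Qed.

Lemma laddA : associative (@ladd F).
Proof. by move=> x y z; apply: lext => i; rewrite !laddE' addrA. Qed.
Lemma laddC : commutative (@ladd F).
Proof. by move=> x y; apply: lext => i; rewrite !laddE' addrC. Qed.
Lemma ladd0 : left_id (@lzero F) (@ladd F).
Proof. by move=> x; apply: lext => i; rewrite !laddE' lzeroE add0r. Qed.
Lemma laddN : left_inverse (@lzero F) (@lopp F) (@ladd F).
Proof. by move=> x; apply: lext => i; rewrite !laddE' loppE' lzeroE addNr. Qed.

Lemma bnd_add (x y : K) L : bnd L x -> bnd L y -> bnd L (ladd x y).
Proof. by move=> Hx Hy i Hi; rewrite laddE' Hx ?Hy ?addr0. Qed.

Lemma lmulDl : left_distributive (@lmul F) (@ladd F).
Proof.
move=> x y z; apply: lext => n.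
set L := Order.min (lbound x) (lbound y).
have Hx : bnd L x by apply: bnd_le (@bndP x); rewrite ge_min lexx.
have Hy : bnd L y by apply: bnd_le (@bndP y); rewrite ge_min lexx orbT.
have Hxy := bnd_add Hx Hy; have Hz := @bndP z.
case: (boolP (n < L + lbound z)) => Hn.
  by rewrite laddE' (lmul_bnd Hxy Hz) ?(lmul_bnd Hx Hz) ?(lmul_bnd Hy Hz) ?addr0.
move/negP: Hn => /idx_split ->; set d := absz _.
rewrite laddE' (lmul_pol (N := d.+1) Hxy Hz) // (lmul_pol (N := d.+1) Hx Hz) // (lmul_pol (N := d.+1) Hy Hz) // -coefD -mulrDl.
rewrite (_ : pol L d.+1 (ladd x y) = pol L d.+1 x + pol L d.+1 y) //.
apply/polyP => j; by rewrite coefD !coef_poly; case: ifP; rewrite ?addr0.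
Qed.

Lemma lmul1 : left_id (@lone F) (@lmul F).
Proof.
move=> x; apply: lext => n.
have H1 : bnd 0 (lone F) by move=> i Hi; rewrite loneE; case: eqP => // E; rewrite E in Hi.
have Hx := @bndP x.
case: (boolP (n < 0 + lbound x)) => Hn.
  by rewrite (lmul_bnd H1 Hx) // Hx //; rewrite add0r in Hn.
move/negP: Hn => /idx_split ->; set d := absz _.
rewrite (lmul_pol (N := d.+1) H1 Hx) //.
have -> : pol 0 d.+1 (lone F) = 1.
  apply/polyP => j; rewrite coef_poly coef1 add0r loneE.
  case: j => [|j] //=; by case: ifP.
by rewrite mul1r coef_poly ltnSn add0r.
Qed.

End L1.

HB.instance Definition _ (F : finFieldType) := gen_eqMixin (laurent F).
HB.instance Definition _ (F : finFieldType) := gen_choiceMixin (laurent F).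
HB.instance Definition _ (F : finFieldType) :=
  GRing.isZmodule.Build (laurent F) (@laddA F) (@laddC F) (@ladd0 F) (@laddN F).
Lemma lone_neq0 (F : finFieldType) : lone F != lzero F.
Proof.
apply/eqP => H; have := congr1 (fun x : laurent F => x 0) H.
by rewrite (@loneE F) (@lzeroE F) /= => /eqP; rewrite oner_eq0.
Qed.


HB.instance Definition _ (F : finFieldType) :=
  GRing.Zmodule_isComNzRing.Build (laurent F) (@lmulA F) (@lmulC F) (@lmul1 F)
    (@lmulDl F) (@lone_neq0 F).

Section L2.
Variable F : finFieldType.
Local Notation K := (laurent F).

Lemma laddE (x y : K) : ladd x y = x + y. Proof. by []. Qed.
Lemma lmulE (x y : K) : lmul x y = x * y. Proof. by []. Qed.
Lemma loppE (x : K) : lopp x = - x. Proof. by []. Qed.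
Lemma lsubE (x y : K) : lsub x y = x - y. Proof. by []. Qed.
Lemma lzero0 : lzero F = 0. Proof. by []. Qed.
Lemma lone1 : lone F = 1. Proof. by []. Qed.

Lemma cD (x y : K) i : (x + y) i = x i + y i. Proof. by []. Qed.
Lemma cN (x : K) i : (- x) i = - x i. Proof. by []. Qed.
Lemma cB (x y : K) i : (x - y) i = x i - y i. Proof. by []. Qed.
Lemma c0 i : (0 : K) i = 0. Proof. exact: lzeroE. Qed.
Lemma c1 i : (1 : K) i = if i == 0 then 1 else 0. Proof. by []. Qed.

Lemma bndD (x y : K) L : bnd L x -> bnd L y -> bnd L (x + y).
Proof. exact: bnd_add. Qed.
Lemma bndN (x : K) L : bnd L x -> bnd L (- x).
Proof. by move=> H i Hi; rewrite cN H ?oppr0. Qed.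
Lemma bndB (x y : K) L : bnd L x -> bnd L y -> bnd L (x - y).
Proof. by move=> Hx Hy; apply: bndD => //; apply: bndN. Qed.
Lemma bndM (x y : K) L1 L2 : bnd L1 x -> bnd L2 y -> bnd (L1 + L2) (x * y).
Proof. exact: lmul_bnd. Qed.
Lemma bnd0 L : bnd L (0 : K). Proof. by move=> i _; rewrite c0. Qed.
Lemma bnd1 : bnd 0 (1 : K).
Proof. by move=> i Hi; rewrite c1; case: eqP => // E; rewrite E in Hi. Qed.
Lemma leadM (x y : K) L1 L2 : bnd L1 x -> bnd L2 y -> (x * y) (L1 + L2) = x L1 * y L2.
Proof.
move=> Hx Hy; have := lmul_pol (N := 1) (d := 0) Hx Hy erefl.
by rewrite addr0 coef0M !coef_poly /= !addr0.
Qed.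

Lemma monoM_coef n (c : F) (x : K) i : (lmonom n c * x) i = c * x (i - n).
Proof.
rewrite -lmulE (@lmul_w _ _ _ _ n 1).
- by rewrite /wsum big_ord1 addr0 lmonomE eqxx.
- by move=> j Hj; rewrite lmonomE; case: eqP => [E|_]; [rewrite E ltxx in Hj|rewrite mul0r].
- move=> j Hj; rewrite lmonomE; case: eqP => [E|_]; last by rewrite mul0r.
  by rewrite E ltr_addl ?ltr01 in Hj || (rewrite E in Hj; lia).
Qed.

Lemma monoM n m (c d : F) : lmonom n c * lmonom m d = lmonom (n + m) (c * d) :> K.
Proof.
apply: lext => i; rewrite monoM_coef !lmonomE.
have -> : (i - n == m) = (i == n + m) by apply/eqP/eqP; lia.
by case: ifP; rewrite ?mulr0.
Qed.

Lemma mono01 : lmonom 0 1 = 1 :> K. Proof. by []. Qed.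
Lemma mono_c0 n : lmonom n 0 = 0 :> K.
Proof. by apply: lext => i; rewrite lmonomE c0; case: ifP. Qed.
Lemma monoD n (c d : F) : lmonom n c + lmonom n d = lmonom n (c + d) :> K.
Proof. by apply: lext => i; rewrite cD !lmonomE; case: ifP; rewrite ?addr0. Qed.
Lemma monoN n (c : F) : - lmonom n c = lmonom n (- c) :> K.
Proof. by apply: lext => i; rewrite cN !lmonomE; case: ifP; rewrite ?oppr0. Qed.
Lemma bnd_mono n (c : F) : bnd n (lmonom n c).
Proof. by move=> i Hi; rewrite lmonomE; case: eqP => // E; rewrite E ltxx in Hi. Qed.

Lemma nzP (x : K) : x <> 0 -> exists i, x i != 0.
Proof.
move=> H; apply: contrapT => H2; apply: H; apply: lext => i; rewrite c0.
by apply/eqP; apply: contrapT => H3; apply: H2; exists i; apply/negP.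
Qed.

Lemma nzP' (x : K) i : x i != 0 -> x <> 0.
Proof. by move=> H E; move: H; rewrite E c0 eqxx. Qed.

Lemma valP (x : K) : x <> 0 -> exists v, x v != 0 /\ bnd v x.
Proof.
move=> /nzP [i Hi].
set L := lbound x.
have ex : exists j : nat, x (L + j%:Z) != 0.
  exists (absz (i - L)); rewrite -idx_split //.
  by move=> H; move: Hi; rewrite lboundP ?eqxx.
case: (ex_minnP ex) => j Hj Hmin.
exists (L + j%:Z); split => // i' Hi'.
case: (boolP (i' < L)) => HL; first exact: lboundP.
rewrite (idx_split (n := i') (L := L)); last by apply/negP.
apply/eqP; apply: contraT => Hne; have := Hmin _ Hne; move: Hi'.
rewrite (idx_split (n := i') (L := L)); last by apply/negP.
move: (absz _) => a; lia.
Qed.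

Lemma mul_nz (x y : K) : x <> 0 -> y <> 0 -> x * y <> 0.
Proof.
move=> /valP [v [Hv Bv]] /valP [w [Hw Bw]].
apply: (@nzP' _ (v + w)); rewrite (leadM Bv Bw) mulf_neq0 //.
Qed.

Lemma mono_nz n (c : F) : c != 0 -> lmonom n c <> 0 :> K.
Proof. by move=> H; apply: (@nzP' _ n); rewrite lmonomE eqxx. Qed.

Section UnitInv.
Variable u : K.
Hypothesis u0 : u 0 = 1.
Hypothesis ub : bnd 0 u.

Fixpoint ws (n : nat) : seq F :=
  if n is n'.+1 then
    rcons (ws n') (- \sum_(i < n'.+1) u (i.+1)%:Z * nth 0 (ws n') (n' - i))
  else [:: 1].

Lemma size_ws n : size (ws n) = n.+1.
Proof. by elim: n => //= n IH; rewrite size_rcons IH. Qed.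

Lemma nth_ws n m j : (j <= n)%N -> (n <= m)%N -> nth 0 (ws m) j = nth 0 (ws n) j.
Proof.
move=> jn; elim: m => [|m IH]; first by rewrite leqn0 => /eqP ->.
rewrite leq_eqVlt => /orP [/eqP -> //|]; rewrite ltnS => nm.
by rewrite /= nth_rcons size_ws ltnS (leq_trans jn nm) IH.
Qed.

Definition wc (j : nat) := nth 0 (ws j) j.

Lemma wc_rec n : wc n.+1 = - \sum_(i < n.+1) u (i.+1)%:Z * wc (n - i).
Proof.
rewrite /wc /= nth_rcons size_ws ltnn eqxx; congr (- _).
by apply: eq_bigr => i _; rewrite (@nth_ws (n - i)) // leq_subr.
Qed.

Definition wf (i : int) : F := match i with Posz j => wc j | Negz _ => 0 end.
Lemma wf_bounded : lbounded wf.
Proof. by exists 0 => -[j|j] //=. Qed.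
Definition winv : K := Laurent wf_bounded.

Lemma winv_bnd : bnd 0 winv.
Proof. by move=> [j|j]. Qed.
Lemma winv0 : winv 0 = 1.
Proof. by []. Qed.

Lemma winvP : u * winv = 1.
Proof.
apply: lext => n.
case: (boolP (n < 0 + 0)) => Hn.
  rewrite (bndM ub winv_bnd) // c1; case: eqP => // E; by rewrite E in Hn.
move/negP: Hn => /idx_split ->; set d := absz _.
rewrite -lmulE (lmul_pol (N := d.+1) ub winv_bnd) // coefM !add0r c1.
under eq_bigr => j _ do rewrite !coef_poly ltn_ord (leq_ltn_trans (leq_subr _ _)) // !add0r.
case: d => [|e]; first by rewrite big_ord1 /= u0 mul1r.
rewrite big_ord_recl /= u0 mul1r subn0.
rewrite wc_rec addrC; apply/eqP; rewrite subr_eq0; apply/eqP.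
by apply: eq_bigr => i _; rewrite /bump /= add1n subSS.
Qed.

End UnitInv.

Lemma unit_inv (u : K) : bnd 0 u -> u 0 = 1 -> exists w, [/\ bnd 0 w, w 0 = 1 & u * w = 1].
Proof. move=> ub u0; exists (winv u); split; [exact: winv_bnd | by [] | exact: winvP]. Qed.

Lemma normal_form (x : K) : x <> 0 ->
  exists n (a : F) u, [/\ a != 0, bnd 0 u, u 0 = 1 & x = lmonom n a * u].
Proof.
move=> /valP [v [Hv Bv]].
exists v, (x v), (lmonom (- v) (x v)^-1 * x); split => //.
- by have := bndM (@bnd_mono (- v) (x v)^-1) Bv; rewrite addNr.
- by have := leadM (@bnd_mono (- v) (x v)^-1) Bv; rewrite addNr => ->; rewrite lmonomE eqxx mulVf.
- by rewrite mulrA monoM addrN mulfV // mono01 mul1r.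
Qed.

Lemma linv (x : K) : x <> 0 -> exists y, x * y = 1.
Proof.
move=> /normal_form [n [a [u [a0 ub u0 ->]]]].
have [w [_ _ uw]] := unit_inv ub u0.
exists (lmonom (- n) a^-1 * w).
by rewrite mulrACA monoM addrN mulfV // mono01 mul1r.
Qed.

End L2.

Ltac mnorm := rewrite ?laddE ?lmulE ?loppE ?lsubE ?lzero0 ?lone1.
Ltac mnormH H := rewrite ?laddE ?lmulE ?loppE ?lsubE ?lzero0 ?lone1 in H.

Section M.
Variable F : finFieldType.
Local Notation K := (laurent F).
Local Notation M2 := (mat2 F).

Lemma m2eq (a b c d a' b' c' d' : K) :
  a = a' -> b = b' -> c = c' -> d = d' -> Mat2 a b c d = Mat2 a' b' c' d'.
Proof. by move=> -> -> -> ->. Qed.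

Lemma mmulA (A B C : M2) : mmul A (mmul B C) = mmul (mmul A B) C.
Proof.
case: A => [a1 a2 a3 a4]; case: B => [b1 b2 b3 b4]; case: C => [c1 c2 c3 c4].
rewrite /mmul /=; mnorm; apply: m2eq; ring.
Qed.

Definition m1 : M2 := Mat2 1 0 0 1.
Definition tinv : K := lmonom (-1) 1.
Lemma t_tinv : lt_ F * tinv = 1.
Proof. by rewrite /lt_ /tinv monoM mulr1 addrN. Qed.
Lemma sigmaE : sigma F = Mat2 0 1 (lt_ F) 0. Proof. by []. Qed.
Definition mconj (m : M2) : M2 := Mat2 (e22 m) (tinv * e21 m) (lt_ F * e12 m) (e11 m).

Ltac mdestr := repeat match goal with A : M2 |- _ => case: A => ? ? ? ? end.
Ltac msolve := mdestr; rewrite ?sigmaE /mmul /mscale /madj /mdet /mconj /m1 /=; mnorm;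
  apply: m2eq; ring.

Lemma mmul_sigma_conj m : mmul (sigma F) m = mmul (mconj m) (sigma F).
Proof.
case: m => a b c d; rewrite sigmaE /mmul /mconj /=; mnorm; apply: m2eq; try ring.
by rewrite mul0r mul1r add0r mulr0 add0r mulrAC [tinv * _]mulrC t_tinv mul1r.
Qed.

Lemma sigma2 : mmul (sigma F) (sigma F) = mscale (lt_ F) m1.
Proof. msolve. Qed.
Lemma madj_sigma : madj (sigma F) = mscale (-1) (sigma F).
Proof. msolve. Qed.
Lemma madjM (A : M2) (B : M2) : madj (mmul A B) = mmul (madj B) (madj A).
Proof. msolve. Qed.
Lemma madj_scale (c : K) (A : M2) : madj (mscale c A) = mscale c (madj A).
Proof. msolve. Qed.
Lemma mscaleMl (c : K) (A : M2) (B : M2) : mmul (mscale c A) B = mscale c (mmul A B).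
Proof. msolve. Qed.
Lemma mscaleMr (c : K) (A : M2) (B : M2) : mmul A (mscale c B) = mscale c (mmul A B).
Proof. msolve. Qed.
Lemma mscale2 (c : K) (d : K) (A : M2) : mscale c (mscale d A) = mscale (c * d) A.
Proof. msolve. Qed.
Lemma mscale1 (A : M2) : mscale 1 A = A.
Proof. msolve. Qed.
Lemma mmul1l (A : M2) : mmul m1 A = A.
Proof. msolve. Qed.
Lemma mmul1r (A : M2) : mmul A m1 = A.
Proof. msolve. Qed.
Lemma madj_mulr (A : M2) : mmul A (madj A) = mscale (mdet A) m1.
Proof. msolve. Qed.
Lemma mdetM (A : M2) (B : M2) : mdet (mmul A B) = mdet A * mdet B.
Proof. mdestr; rewrite /mmul /mdet /=; mnorm; ring. Qed.
Lemma mdet_scale (c : K) (A : M2) : mdet (mscale c A) = c * c * mdet A.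
Proof. mdestr; rewrite /mscale /mdet /=; mnorm; ring. Qed.

Lemma meqE (A B : M2) : meq A B -> A = B.
Proof.
case: A => a b c d; case: B => a' b' c' d' [/= h1 h2 h3 h4].
by apply: m2eq; apply: lext.
Qed.

Lemma meq_refl (A : M2) : meq A A.
Proof. by split. Qed.

Lemma lnzE (c : K) : lnz c <-> c <> 0.
Proof. by split => [[i Hi]|/nzP //]; apply: nzP' Hi. Qed.

Lemma projE (A B : M2) : proj_eq A B <-> exists c, c <> 0 /\ A = mscale c B.
Proof.
split => [[c [/lnzE Hc /meqE E]]|[c [Hc E]]]; exists c; split => //.
  by apply/lnzE.
by rewrite E; exact: meq_refl.
Qed.

Lemma one_nz : (1 : K) <> 0.
Proof. by apply/eqP; exact: oner_neq0. Qed.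

Lemma tO_bnd (x : K) : in_tO x <-> bnd 1 x.
Proof. by split => H i Hi; apply: H; move: Hi; rewrite -?lez_addr1 ?ltz1 //; lia. Qed.

Lemma bndM' (x y : K) L1 L2 L : bnd L1 x -> bnd L2 y -> L <= L1 + L2 -> bnd L (x * y).
Proof. by move=> Hx Hy HL; apply: bnd_le HL (bndM Hx Hy). Qed.

Lemma p1_nz (x : K) : in_1tO x -> x <> 0.
Proof. by case=> _ x0; apply: (@nzP' _ _ 0); rewrite x0 oner_neq0. Qed.

Lemma p1M (x y : K) : in_1tO x -> in_1tO y -> in_1tO (x * y).
Proof.
case=> bx x0 [hy y0]; split; first exact: bndM' bx hy _.
by have := leadM bx hy; rewrite addr0 x0 y0 mulr1.
Qed.

Lemma p1D (x y : K) : in_1tO x -> bnd 1 y -> in_1tO (x + y).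
Proof.
case=> bx x0 hy; split; first by apply: bndD => //; apply: bnd_le hy.
by rewrite cD x0 hy // addr0.
Qed.

Lemma p1_1 : in_1tO (1 : K).
Proof. by split; [exact: bnd1|]. Qed.

Lemma I0_m1 : inI0 m1.
Proof. split => //=; [exact: p1_1 | exact: bnd0 | apply/tO_bnd; exact: bnd0 | exact: p1_1]. Qed.

Lemma I0_mul (m n : M2) : inI0 m -> inI0 n -> inI0 (mmul m n).
Proof.
case: m => a b c d; case: n => a' b' c' d'.
case=> /= ha hb /tO_bnd hc hd [/= ha' hb' /tO_bnd hc' hd'].
rewrite /inI0 /mmul /=; mnorm; split.
- by apply: p1D (p1M ha ha') _; apply: bndM' hb hc' _.
- by apply: bndD; [apply: bndM' ha.1 hb' _ | apply: bndM' hb hd'.1 _].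
- by apply/tO_bnd; apply: bndD; [apply: bndM' hc ha'.1 _ | apply: bndM' hd.1 hc' _].
- by rewrite addrC; apply: p1D (p1M hd hd') _; apply: bndM' hc hb' _.
Qed.

Lemma I0_adj (m : M2) : inI0 m -> inI0 (madj m).
Proof.
case: m => a b c d; case=> /= ha hb hc hd; rewrite /madj /=; mnorm; split => //.
- exact: bndN.
- by apply/tO_bnd; apply: bndN; apply/tO_bnd.
Qed.

Lemma I0_conj (m : M2) : inI0 m -> inI0 (mconj m).
Proof.
case: m => a b c d; case=> /= ha hb /tO_bnd hc hd; rewrite /mconj /=; split => //.
- by apply: bndM' (@bnd_mono _ (-1) 1) hc _.
- by apply/tO_bnd; apply: bndM' (@bnd_mono _ 1 1) hb _.
Qed.

Lemma I0_det (m : M2) : inI0 m -> mdet m <> 0.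
Proof.
case: m => a b c d; case=> /= ha hb /tO_bnd hc hd; rewrite /mdet /=; mnorm.
apply: p1_nz; rewrite -mulNr; apply: p1D (p1M ha hd) _.
by apply: bndM' (bndN hb) hc _.
Qed.

Lemma A_nf (M : M2) : inA M -> exists m c, [/\ inI0 m, c <> 0 &
   M = mscale c m \/ M = mscale c (mmul m (sigma F))].
Proof.
elim=> {M}.
- by move=> M HM; exists M, 1; split => //; [exact: one_nz | left; rewrite mscale1].
- by exists m1, 1; split; [exact: I0_m1 | exact: one_nz | right; rewrite mscale1 mmul1l].
- move=> M _ [m [c [Hm Hc [->|->]]]].
    by exists (madj m), c; split => //; [exact: I0_adj | left; rewrite madj_scale].
  exists (mconj (madj m)), (- c); split.
  + by apply: I0_conj; apply: I0_adj.
  + by move=> /eqP; rewrite oppr_eq0 => /eqP.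
  + right; rewrite madj_scale madjM madj_sigma mscaleMl mmul_sigma_conj mscale2.
    by rewrite mulrN1.
- move=> M N _ [m [c [Hm Hc HM]]] _ [n [c' [Hn Hc' HN]]].
  have cc : c * c' <> 0 by apply: mul_nz.
  case: HM => ->; case: HN => ->.
  + exists (mmul m n), (c * c'); split => //; first exact: I0_mul.
    by left; rewrite mscaleMl mscaleMr mscale2.
  + exists (mmul m n), (c * c'); split => //; first exact: I0_mul.
    by right; rewrite mscaleMl mscaleMr mscale2 mmulA.
  + exists (mmul m (mconj n)), (c * c'); split => //.
      by apply: I0_mul => //; apply: I0_conj.
    right; rewrite mscaleMl mscaleMr mscale2 -mmulA mmul_sigma_conj.
    by rewrite !mmulA.
  + exists (mmul m (mconj n)), (c * c' * lt_ F); split => //.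
    * by apply: I0_mul => //; apply: I0_conj.
    * by apply: mul_nz => //; apply: mono_nz; rewrite oner_neq0.
    left; rewrite mscaleMl mscaleMr mscale2 -mmulA (mmulA (sigma F)) mmul_sigma_conj.
    by rewrite -!mmulA sigma2 !mscaleMr mmul1r mscale2.
- move=> M N /projE [c0 [Hc0 ->]] _ [m [c [Hm Hc HN]]].
  exists m, (c0 * c); split => //; first exact: mul_nz.
  by case: HN => ->; [left|right]; rewrite mscale2.
Qed.

Lemma Uk_p1 k (z : K) : inUk k z -> in_1tO z.
Proof. by case=> h1 [h2 _]. Qed.

Lemma Uk_bnd k (z : K) : inUk k z -> bnd k%:Z (z - 1).
Proof.
case=> h1 [h2 h3] i Hi; rewrite cB c1.
case: (ltrgtP i 0) => Hi0.
- by rewrite h1 // subr0.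
- by rewrite h3 // subr0.
- by rewrite Hi0 h2 subrr.
Qed.

Lemma R_form k (r : M2) : inR k r -> exists n (a : F) (Y : K),
  [/\ a != 0, r = Mat2 (lmonom n a) Y 0 1 &
      forall i, Y i != 0 -> (n - k%:Z + 1 <= i) && (i <= n - 1)].
Proof.
case=> n [a [a0 [h1 h2 h3 h4]]]; exists n, a, (e12 r); split => //.
by case: r h1 h2 h3 h4 => /= ? ? ? ? h1 h2 h3 h4; apply: m2eq => //; apply: lext.
Qed.

Lemma cancel_nz (c x y : K) : c <> 0 -> c * x = c * y -> x = y.
Proof.
move=> Hc E; apply/eqP; rewrite -subr_eq0; apply/eqP; apply: contrapT => H.
by apply: (mul_nz Hc H); rewrite mulrBr E subrr.
Qed.

Lemma lead_cmp (P Q : K) n1 n2 (a1 a2 : F) : in_1tO P -> in_1tO Q -> a1 != 0 -> a2 != 0 ->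
  P * lmonom n2 a2 = Q * lmonom n1 a1 -> n1 = n2 /\ a1 = a2.
Proof.
case=> bP P0 [bQ Q0] a10 a20 E.
have E1 i : a2 * P (i - n2) = a1 * Q (i - n1).
  by have := congr1 (fun x : K => x i) E; rewrite ![_ * lmonom _ _]mulrC !monoM_coef.
case: (ltrgtP n1 n2) => Hn.
- have := E1 n1; rewrite subrr Q0 mulr1 bP ?mulr0; last by rewrite subr_lt0.
  by move=> /eqP; rewrite eq_sym (negbTE a10).
- have := E1 n2; rewrite subrr P0 mulr1 (bQ (n2 - n1)) ?mulr0; last by rewrite subr_lt0.
  by move=> /eqP; rewrite (negbTE a20).
- by split => //; have := E1 n2; rewrite Hn subrr P0 Q0 !mulr1.
Qed.


Lemma Ybnd k n (Y : K) : (forall i, Y i != 0 -> (n - k%:Z + 1 <= i) && (i <= n - 1)) ->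
  bnd (n - k%:Z + 1) Y.
Proof.
move=> H i Hi; apply/eqP; apply: contraT => /H /andP [h _].
by move: Hi; rewrite ltNge h.
Qed.

Lemma Ytop k n (Y : K) : (forall i, Y i != 0 -> (n - k%:Z + 1 <= i) && (i <= n - 1)) ->
  forall i, n <= i -> Y i = 0.
Proof.
move=> H i Hi; apply/eqP; apply: contraT => /H /andP [_ h].
by move: Hi h; clear; lia.
Qed.

Lemma R_core k (r1 r2 : M2) (z1 z2 lam nu : K) (m : M2) :
  inR k r1 -> inR k r2 -> inUk k z1 -> inUk k z2 -> inI0 m -> lam <> 0 -> nu <> 0 ->
  (mscale lam r2 = mscale nu (mmul (Mat2 z2 0 0 z1) (mmul r1 m)) -> r1 = r2) /\
  (mscale lam r2 <> mscale nu (mmul (Mat2 z2 0 0 z1) (mmul r1 (mmul m (sigma F))))).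
Proof.
move=> /R_form [n1 [a1 [Y1 [a10 -> HY1]]]] /R_form [n2 [a2 [Y2 [a20 -> HY2]]]].
move=> hz1 hz2; case: m => al be ga de [/= ha hb /tO_bnd hc hd] Hlam Hnu.
have z1nz := p1_nz (Uk_p1 hz1); have z2nz := p1_nz (Uk_p1 hz2).
have denz := p1_nz hd.
split; last first.
  move=> E; have := congr1 (@e21 F) E; rewrite sigmaE /mscale /mmul /=; mnorm => H.
  have : nu * (z1 * (de * lt_ F)) = 0 by rewrite -(mulr0 lam) H; ring.
  apply: mul_nz => //; apply: mul_nz => //; apply: mul_nz => //.
  by apply: mono_nz; rewrite oner_neq0.
move=> E.
have H11 := congr1 (@e11 F) E; have H12 := congr1 (@e12 F) E.
have H21 := congr1 (@e21 F) E; have H22 := congr1 (@e22 F) E.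
rewrite /mscale /mmul /= in H11 H12 H21 H22.
mnormH H11; mnormH H12; mnormH H21; mnormH H22.
have g0 : ga = 0.
  apply: contrapT => Hg; apply: (mul_nz Hnu (mul_nz z1nz Hg)).
  by rewrite -(mulr0 lam) H21; ring.
subst ga.
have Elam : lam = nu * (z1 * de) by rewrite -[lam]mulr1 H22; ring.
have EX : (z1 * de) * lmonom n2 a2 = (z2 * al) * lmonom n1 a1.
  apply: (cancel_nz Hnu); transitivity (lam * lmonom n2 a2); first by rewrite Elam; ring.
  by rewrite H11; ring.
have [en ea] := lead_cmp (p1M (Uk_p1 hz1) hd) (p1M (Uk_p1 hz2) ha) a10 a20 EX.
subst n2 a2.
have EY : z1 * de * Y2 = z2 * lmonom n1 a1 * be + z2 * Y1 * de.
  apply: (cancel_nz Hnu); transitivity (lam * Y2); first by rewrite Elam; ring.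
  by rewrite H12; ring.
have HD : de * (Y2 - Y1) = z2 * lmonom n1 a1 * be + (z2 - 1) * (de * Y1) - (z1 - 1) * (de * Y2).
  apply/eqP; rewrite -subr_eq0; apply/eqP.
  transitivity (z1 * de * Y2 - (z2 * lmonom n1 a1 * be + z2 * Y1 * de)); first by ring.
  by rewrite EY subrr.
have bY1 := Ybnd HY1; have bY2 := Ybnd HY2.
have bD : bnd n1 (de * (Y2 - Y1)).
  rewrite HD; apply: bndB; first apply: bndD.
  - apply: bndM' (bndM' (Uk_p1 hz2).1 (@bnd_mono _ n1 a1) (lexx _)) hb _.
    by rewrite add0r addr0.
  - apply: bndM' (Uk_bnd hz2) (bndM' hd.1 bY1 (lexx _)) _.
    by rewrite add0r; move: (n1) (k) => a b; lia.
  - apply: bndM' (Uk_bnd hz1) (bndM' hd.1 bY2 (lexx _)) _.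
    by rewrite add0r; move: (n1) (k) => a b; lia.
have Dlow : forall i, i < n1 -> (Y2 - Y1) i = 0.
  move=> i Hi; apply/eqP; apply: contraT => Hne.
  have [v [Hv Bv]] := valP (nzP' Hne).
  have vi : v <= i by rewrite leNgt; apply/negP => /Bv /eqP; rewrite (negbTE Hne).
  have := leadM hd.1 Bv; rewrite add0r (proj2 hd) mul1r bD; last exact: le_lt_trans vi Hi.
  by move=> /esym /eqP; rewrite (negbTE Hv).
apply: m2eq => //; apply: lext => i.
case: (ltP i n1) => Hi.
  by apply/eqP; rewrite eq_sym -subr_eq0 -cB; apply/eqP; apply: Dlow.
by rewrite (Ytop HY1) ?(Ytop HY2).
Qed.

Lemma A_det (a : M2) : inA a -> mdet a <> 0.
Proof.
move=> /A_nf [m [c [Hm Hc [->|->]]]]; rewrite mdet_scale ?mdetM.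
  by apply: mul_nz; [apply: mul_nz|apply: I0_det].
apply: mul_nz; first by apply: mul_nz.
apply: mul_nz; first exact: I0_det.
have -> : mdet (sigma F) = - lt_ F by rewrite sigmaE /mdet /=; mnorm; ring.
by move=> /eqP; rewrite oppr_eq0 => /eqP; apply: mono_nz; rewrite oner_neq0.
Qed.

Lemma diagzE (z : K) : diagz z = Mat2 z 0 0 1. Proof. by []. Qed.

Lemma orbit_rel (g a1 a2 : M2) (z1 z2 c1 c2 : K) :
  mscale (c1 * mdet a1 * z1) (mscale c2 (mmul (mmul (diagz z2) g) a2)) =
  mscale c2 (mmul (Mat2 z2 0 0 z1)
     (mmul (mscale c1 (mmul (mmul (diagz z1) g) a1)) (mmul (madj a1) a2))).
Proof. rewrite !diagzE; msolve. Qed.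

Lemma uniq_part k (g r1 r2 : M2) : inR k r1 -> inR k r2 -> orbitA k g r1 -> orbitA k g r2 ->
  proj_eq r1 r2.
Proof.
move=> R1 R2 [z1 [a1 [hz1 [ha1 /projE [c1 [Hc1 E1]]]]]] [z2 [a2 [hz2 [ha2 /projE [c2 [Hc2 E2]]]]]].
have hb : inA (mmul (madj a1) a2) by apply: A_mul => //; apply: A_inv.
have Hlam : c1 * mdet a1 * z1 <> 0.
  by apply: mul_nz; [apply: mul_nz => //; apply: A_det | apply: p1_nz (Uk_p1 hz1)].
have := orbit_rel g a1 a2 z1 z2 c1 c2; rewrite -E1 -E2.
case: (A_nf hb) => m [cb [Hm Hcb [->|->]]]; rewrite !mscaleMr mscale2 => E.
  have -> : r1 = r2 by apply: (proj1 (R_core R1 R2 hz1 hz2 Hm Hlam (mul_nz Hc2 Hcb))).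
  by apply/projE; exists 1; split; [exact: one_nz | rewrite mscale1].
by case: (proj2 (R_core R1 R2 hz1 hz2 Hm Hlam (mul_nz Hc2 Hcb))).
Qed.

Lemma kill21 (h : M2) v : e22 h v != 0 -> bnd v (e22 h) -> bnd (v + 1) (e21 h) ->
  exists a, inI0 a /\ e21 (mmul h a) = 0.
Proof.
case: h => h11 h12 p q /= qv bq bp.
set s := lmonom (- v) (q v)^-1.
have bs : bnd (- v) s := @bnd_mono _ _ _.
exists (Mat2 (s * q) 0 (- (s * p)) 1); split.
- split => /=.
  + split; first by apply: bndM' bs bq _; rewrite addNr.
    by have := leadM bs bq; rewrite addNr => ->; rewrite lmonomE eqxx mulVf.
  + exact: bnd0.
  + by apply/tO_bnd; apply: bndN; apply: bndM' bs bp _; rewrite addrA addNr add0r.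
  + exact: p1_1.
- by rewrite /mmul /=; mnorm; ring.
Qed.

Lemma sigma_right (g : M2) : mmul g (sigma F) =
  Mat2 (e12 g * lt_ F) (e11 g) (e22 g * lt_ F) (e21 g).
Proof. case: g => *; rewrite sigmaE /mmul /=; mnorm; apply: m2eq; ring. Qed.

Lemma make_upper (g : M2) : inGL g -> exists a, inA a /\ e21 (mmul g a) = 0.
Proof.
move=> /lnzE Hdet.
set p := e21 g; set q := e22 g.
have [[v [qv [bq bp]]]|[w [pw [bp bq]]]] :
  (exists v, q v != 0 /\ bnd v q /\ bnd (v + 1) p) \/
  (exists w, p w != 0 /\ bnd w p /\ bnd (w + 1) (q * lt_ F)).
- case: (pselect (q = 0)) => [q0|qnz].
    have pnz : p <> 0.
      move=> p0; apply: Hdet; rewrite /mdet -/p -/q p0 q0; mnorm; ring.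
    have [w [pw bp]] := valP pnz; right; exists w; split => //; split => //.
    by rewrite q0 mul0r; exact: bnd0.
  have [v [qv bq]] := valP qnz.
  case: (pselect (bnd (v + 1) p)) => Hp; first by left; exists v.
  have pnz : p <> 0 by move=> p0; apply: Hp; rewrite p0; exact: bnd0.
  have [w [pw bp]] := valP pnz; right; exists w; split => //; split => //.
  apply: bndM' bq (@bnd_mono _ 1 1) _.
  rewrite lerD2r leNgt; apply/negP => vw; apply: Hp.
  by apply: bnd_le bp; move: vw; clear; lia.
- have [a [Ha Ea]] := @kill21 g v qv bq bp.
  by exists a; split => //; apply: A_I0.
- have := @kill21 (mmul g (sigma F)) w; rewrite sigma_right => /(_ pw bp bq) [a [Ha Ea]].
  exists (mmul (sigma F) a); split; first by apply: A_mul; [apply: A_sigma | apply: A_I0].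
  by rewrite mmulA sigma_right.
Qed.

Lemma ltr_bounded (P : pred int) (Y : K) : lbounded (fun i => if P i then Y i else 0).
Proof. by exists (lbound Y) => i Hi; rewrite lboundP //; case: ifP. Qed.
Definition ltr (P : pred int) (Y : K) : K := Laurent (ltr_bounded P Y).
Lemma ltrE P Y i : ltr P Y i = if P i then Y i else 0. Proof. by []. Qed.
Lemma ltr_split (P : pred int) (Y : K) : Y = ltr P Y + ltr (predC P) Y.
Proof. by apply: lext => i; rewrite cD !ltrE /=; case: (P i); rewrite ?addr0 ?add0r. Qed.

Lemma normalize_upper (g1 : M2) : e21 g1 = 0 -> mdet g1 <> 0 ->
  exists a2 a3 (c : K) n (a0 : F) (Y : K),
  [/\ inI0 a2, inI0 a3, c <> 0, a0 != 0 &
      mscale c (mmul (mmul g1 a2) a3) = Mat2 (lmonom n a0) Y 0 1 /\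
      forall i, n <= i -> Y i = 0].
Proof.
case: g1 => x y p w /= -> Hd.
have xnz : x <> 0 by move=> x0; apply: Hd; rewrite /mdet /= x0; mnorm; ring.
have wnz : w <> 0 by move=> w0; apply: Hd; rewrite /mdet /= w0; mnorm; ring.
have [c wc] := linv wnz.
have cnz : c <> 0 by move=> c0; apply: one_nz; rewrite -wc c0 mulr0.
have [n [a0 [u [a00 ub u0 Ecx]]]] := normal_form (mul_nz cnz xnz).
have [iu [iub iu0 uiu]] := unit_inv ub u0.
set Y := c * y.
set Yhi := ltr (fun i => n <= i) Y.
set Ylo := ltr (predC (fun i => n <= i)) Y.
have bhi : bnd n Yhi by move=> i Hi; rewrite ltrE leNgt Hi.
set be := - (lmonom (- n) a0^-1 * Yhi).
have bbe : bnd 0 be by apply: bndN; apply: bndM' (@bnd_mono _ (- n) _) bhi _; rewrite addNr.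
have key : lmonom n a0 * be = - Yhi.
  by rewrite /be mulrN mulrA monoM addrN mulfV // mono01 mul1r.
exists (Mat2 iu 0 0 1), (Mat2 1 be 0 1), c, n, a0, Ylo; split => //.
- by split => //=; [exact: bnd0 | apply/tO_bnd; exact: bnd0 | exact: p1_1].
- by split => //=; [exact: p1_1 | apply/tO_bnd; exact: bnd0 | exact: p1_1].
split; last by move=> i Hi; rewrite ltrE /= Hi.
rewrite /mscale /mmul /=; mnorm; apply: m2eq.
- transitivity (c * x * iu); first by ring.
  by rewrite Ecx -mulrA uiu mulr1.
- transitivity (c * x * iu * be + Y); first by rewrite /Y; ring.
  rewrite Ecx -(mulrA _ u) uiu mulr1 key (ltr_split (fun i => n <= i) Y) -/Yhi -/Ylo.
  by ring.
- by ring.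
- by transitivity (w * c); [ring|].
Qed.

Lemma inGL_r0 n (a0 : F) (Y : K) : a0 != 0 -> inGL (Mat2 (lmonom n a0) Y 0 1).
Proof.
move=> a00; apply/lnzE; rewrite /mdet /=; mnorm.
rewrite mulr1 mulr0 subr0; exact: mono_nz.
Qed.

Lemma relevant_low k (psi : F -> algC) (chi : M2 -> algC) (f : M2 -> algC) n (a0 : F) (Y : K) :
  (0 < k)%N -> add_character psi -> is_chi psi chi ->
  (forall M N, proj_eq M N -> f M = f N) ->
  (forall z a M, inUk k z -> inA a -> inGL M -> f (mmul (mmul (diagz z) M) a) = chi a * f M) ->
  a0 != 0 -> f (Mat2 (lmonom n a0) Y 0 1) != 0 ->
  forall i, i <= n - k%:Z -> Y i = 0.
Proof.
move=> k0 [_ _ [s0 Hs0]] [_ _ _ chiI0 _] fproj fequiv a00 Hf i Hi.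
apply/eqP; apply: contraT => Yi.
have [m0 [Ym0 bY]] := valP (nzP' Yi).
have m0i : m0 <= i by rewrite leNgt; apply/negP => /bY /eqP; rewrite (negbTE Yi).
have nm : k%:Z <= n - m0 by move: m0i Hi; clear; lia.
have nm1 : (0 < n - m0) by move: nm k0; clear; lia.
set e := - (s0 * a0 / Y m0).
set z : K := 1 + lmonom (n - m0) e.
have hz : inUk k z.
  split; [|split].
  - apply: bndD; first exact: bnd1.
    by apply: bnd_le (@bnd_mono _ _ _); apply: ltW.
  - by rewrite cD c1 lmonomE eqxx eq_sym gt_eqF // addr0.
  - move=> j j0 jk; rewrite cD c1 lmonomE gt_eqF // add0r.
    by case: eqP => // E; move: jk nm; rewrite E; clear; lia.
set M := lmonom (- m0) (- (e / a0)).
set be := M * Y.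
have bbe : bnd 0 be by apply: bndM' (@bnd_mono _ (- m0) _) bY _; rewrite addNr.
have be0 : be 0 = s0.
  rewrite /be /M monoM_coef sub0r opprK /e; field.
  by rewrite a00 Ym0.
have key : lmonom n a0 * M = - lmonom (n - m0) e.
  rewrite /M monoM monoN; congr lmonom; field; by rewrite a00.
set r0 := Mat2 (lmonom n a0) Y 0 1.
set a' := Mat2 1 be 0 z.
have ha' : inI0 a' by split => //=; [exact: p1_1 | apply/tO_bnd; exact: bnd0 | exact: Uk_p1 hz].
have ident : mmul (mmul (diagz z) r0) a' = mscale z r0.
  rewrite diagzE /r0 /a' /mmul /mscale /=; mnorm; apply: m2eq; try ring.
  transitivity (z * ((lmonom n a0 * M) * Y + z * Y)); first by rewrite /be; ring.
  by rewrite key /z; ring.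
have E1 := fequiv z a' r0 hz (A_I0 ha') (inGL_r0 n Y a00).
rewrite (fproj _ r0) in E1; last by apply/projE; exists z; split => //; exact: p1_nz (Uk_p1 hz).
have hs : e12 a' 0 + e21 a' 1 = s0.
  by rewrite -[RHS]be0 -[RHS]addr0; congr (_ + _); exact: c0.
rewrite chiI0 // hs in E1.
move: Hs0; rewrite -(inj_eq (mulIf Hf)) -E1 mul1r eqxx //.
Qed.

End M.

Lemma Uk1 (F : finFieldType) k : inUk k (1 : laurent F).
Proof.
split; first exact: bnd1. split; first by [].
by move=> i i0 _; rewrite c1 gt_eqF.
Qed.

Theorem mainTheorem3 (F : finFieldType) (k : nat) (psi : F -> algC)
    (chi : mat2 F -> algC) :
  (0 < k)%N ->
  add_character psi ->
  is_chi psi chi ->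
  forall g : mat2 F, inGL g -> relevant k chi g ->
    (exists r, inR k r /\ orbitA k g r) /\
    (forall r1 r2, inR k r1 -> inR k r2 -> orbitA k g r1 -> orbitA k g r2 ->
       proj_eq r1 r2).
Proof.
move=> k0 hpsi hchi g gGL [f [fproj fzero [M0 fM0] fequiv]].
split; last by move=> r1 r2 R1 R2 O1 O2; exact: uniq_part R1 R2 O1 O2.
have chinz : forall a, inA a -> chi a != 0 by case: hchi.
have fg : f g != 0.
  have [z [a [hz [ha /projE [c [Hc E]]]]]] : orbitA k g M0.
    by apply: contrapT => H; move: fM0; rewrite fzero ?eqxx.
  move: fM0; rewrite (fproj M0 (mmul (mmul (diagz z) g) a)); last by apply/projE; exists c.
  by rewrite fequiv // mulf_eq0 negb_or => /andP [].
have [a1 [ha1 E21]] := make_upper gGL.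
have Hd : mdet (mmul g a1) <> 0.
  by rewrite mdetM; apply: mul_nz; [apply/lnzE | apply: A_det].
have [a2 [a3 [c [n [a0 [Y [ha2 ha3 Hc a00 [Er0 Ytop]]]]]]]] := normalize_upper E21 Hd.
set atot := mmul a1 (mmul a2 a3).
have hat : inA atot by apply: A_mul => //; apply: A_mul; apply: A_I0.
have Er : mscale c (mmul g atot) = Mat2 (lmonom n a0) Y 0 1 by rewrite /atot !mmulA.
have diag1 : diagz (lone F) = m1 F by [].
have pe : proj_eq (Mat2 (lmonom n a0) Y 0 1) (mmul (mmul (diagz (lone F)) g) atot).
  by apply/projE; exists c; rewrite diag1 mmul1l Er.
have fr0 : f (Mat2 (lmonom n a0) Y 0 1) != 0.
  rewrite (fproj _ _ pe) fequiv //; first by rewrite mulf_neq0 // chinz.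
  exact: Uk1.
have low := relevant_low k0 hpsi hchi fproj fequiv a00 fr0.
exists (Mat2 (lmonom n a0) Y 0 1); split.
  exists n, a0; split => //; split => // i /= Hi.
  apply/andP; split.
    rewrite leNgt; apply/negP => H; move: Hi; rewrite low ?eqxx //.
    by move: H; clear; lia.
  rewrite leNgt; apply/negP => H; move: Hi; rewrite Ytop ?eqxx //.
  by move: H; clear; lia.
by exists (lone F), atot; split; [exact: Uk1 | split].
Qed.
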